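(* $\mu(Q_3)=5$, $\mu(Q_4)=9$ and $\mu(Q_5)=16$. For instance, $\{000,001,100,110,011\}$ is a mutual-visibility set of $Q_3$; $\{0000,0001,0100,0110,0011,1101,1010,1011,1110\}$ is one of $Q_4$; and $\{00000,00001,00100,00110,00011,01101,01010,01011,01110,10101,10111,11000,11001,11100,11110,11011\}$ is one of $Q_5$.
   Context: $Q_d$ is the hypercube with vertex set $\{0,1\}^d$, two vertices adjacent iff their strings differ in exactly one bit. For a connected graph $G$ and $X\subseteq V(G)$, two vertices $x,y$ are $X$-visible if some shortest $x,y$-path has no internal vertex in $X$. $X$ is a mutual-visibility set if every two vertices of $X$ are $X$-visible; $\mu(G)$ is the maximum cardinality of a mutual-visibility set of $G$. *)

(* Defs.v *)
From mathcomp Require Import all_boot.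
Set Implicit Arguments. Unset Strict Implicit. Unset Printing Implicit Defensive.

Section Graphs.
Variables (T : finType) (e : rel T).

Definition walk (x y : T) (p : seq T) : Prop := path e x p /\ last x p = y.

Definition shortest_path (x y : T) (p : seq T) : Prop :=
  walk x y p /\ forall q, walk x y q -> size p <= size q.

(* internal vertices of the walk x :: p (all vertices except x and last x p) *)
Definition internal (p : seq T) : seq T := take (size p).-1 p.

Definition visible (X : {set T}) (x y : T) : Prop :=
  exists p, shortest_path x y p /\ forall v, v \in internal p -> v \notin X.

Definition mutual_visibility_set (X : {set T}) : Prop :=
  forall x y, x \in X -> y \in X -> visible X x y.

Definition is_mu (n : nat) : Prop :=
  (exists X : {set T}, mutual_visibility_set X /\ #|X| = n) /\
  (forall X : {set T}, mutual_visibility_set X -> #|X| <= n).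
End Graphs.

Definition Qadj (d : nat) : rel (d.-tuple bool) :=
  fun u v => #|[set i : 'I_d | tnth u i != tnth v i]| == 1.

(* the bit string b_0 b_1 ... b_{d-1}, written as a list of 0/1 digits *)
Definition vtx (d : nat) (s : seq nat) : d.-tuple bool :=
  [tuple nth 0 s i != 0 | i < d].

(* Main.v *)
Require Import Defs.
From mathcomp Require Import all_boot zify.
Set Implicit Arguments. Unset Strict Implicit. Unset Printing Implicit Defensive.

Definition V := seq bool.
Fixpoint ahas {A} (p : A -> bool) (s : seq A) := if s is x :: s' then (if p x then true else ahas p s') else false.
Fixpoint aall {A} (p : A -> bool) (s : seq A) := if s is x :: s' then (if p x then aall p s' else false) else true.
Lemma ahasE A (p : A -> bool) s : ahas p s = has p s.
Proof. by elim: s => //= x s ->; case: (p x). Qed.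
Lemma aallE A (p : A -> bool) s : aall p s = all p s.
Proof. by elim: s => //= x s ->; case: (p x). Qed.

Fixpoint cflip (i : nat) (s : V) : V := match s with [::] => [::] | b :: s' => if i is i'.+1 then b :: cflip i' s' else ~~ b :: s' end.
Fixpoint cham (s t : V) : nat := match s, t with b :: s', c :: t' => (b != c) + cham s' t' | _, _ => 0 end.

Lemma size_cflip i s : size (cflip i s) = size s.
Proof. by elim: s i => [|b s IH] [|i] //=; rewrite IH. Qed.

Lemma cham_sym s t : cham s t = cham t s.
Proof. by elim: s t => [|b s IH] [|c t] //=; rewrite IH eq_sym. Qed.

Lemma cham_refl s : cham s s = 0.
Proof. by elim: s => //= b s ->; rewrite eqxx. Qed.

Lemma cham_eq0 s t : size s = size t -> (cham s t == 0) = (s == t).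
Proof.
elim: s t => [|b s IH] [|c t] //= [] Hs; rewrite eqseq_cons -IH //.
by case: b; case: c.
Qed.

Lemma cham_flip i s t : i < size s -> size s = size t ->
  cham (cflip i s) t + 2 * (nth false s i != nth false t i) = (cham s t).+1.
Proof.
elim: s t i => [|b s IH] [|c t] [|i] //=.
- by move=> _ _; case: b; case: c => /=; lia.
- move=> Hi [] Hs; have := IH t i Hi Hs; lia.
Qed.

Lemma cham_pos s t : size s = size t -> 0 < cham s t ->
  exists2 i, i < size s & nth false s i != nth false t i.
Proof.
elim: s t => [|b s IH] [|c t] //= [] Hs.
case: (b =P c) => [->|Hbc] /=.
- by rewrite add0n => /(IH _ Hs) [i Hi Hn]; exists i.+1.
- by move=> _; exists 0 => //; apply/eqP.
Qed.

Lemma cham1 s t : size s = size t -> cham s t = 1 -> exists2 i, i < size s & t = cflip i s.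
Proof.
elim: s t => [|b s IH] [|c t] //= [] Hs.
case: (b =P c) => [->|Hbc] /=.
- by rewrite add0n => /(IH _ Hs) [i Hi ->]; exists i.+1.
- move=> [] /eqP; rewrite cham_eq0 // => /eqP ->; exists 0 => //.
  by case: b c Hbc => [] [].
Qed.

Lemma cham_cflip i s : i < size s -> cham s (cflip i s) = 1.
Proof.
move=> Hi; have := cham_flip Hi (erefl (size s)); rewrite cham_refl eqxx.
by rewrite cham_sym addn0.
Qed.

Lemma nth_cflip_same i s : i < size s -> nth false (cflip i s) i = ~~ nth false s i.
Proof. by elim: s i => [|b s IH] [|i] //= /IH. Qed.

Inductive trie := TL (b : bool) | TN (l r : trie).
Fixpoint tmem (t : trie) (s : V) : bool :=
  match t, s with TL b, _ => b | TN l r, c :: s' => tmem (if c then r else l) s' | TN _ _, [::] => false end.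
Fixpoint tempty (n : nat) : trie := if n is n'.+1 then TN (tempty n') (tempty n') else TL false.
Fixpoint tins (s : V) (t : trie) : trie :=
  match s, t with
  | c :: s', TN l r => if c then TN l (tins s' r) else TN (tins s' l) r
  | [::], TL _ => TL true
  | _, _ => t end.
Definition tbuild d (l : seq V) := foldr tins (tempty d) l.
Fixpoint tfull (k : nat) (t : trie) : bool :=
  match k, t with 0, TL _ => true | k'.+1, TN l r => tfull k' l && tfull k' r | _, _ => false end.

Lemma tfull_empty k : tfull k (tempty k).
Proof. by elim: k => //= k ->. Qed.
Lemma tmem_empty k s : tmem (tempty k) s = false.
Proof. by elim: k s => [|k IH] [|c s] //=; case: c. Qed.
Lemma tins_full k t s : size s = k -> tfull k t -> tfull k (tins s t).
Proof.
elim: k t s => [|k IH] [b|l r] [|c s] //= [] Hs /andP [Hl Hr].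
by case: c => /=; rewrite ?Hl ?Hr ?IH.
Qed.
Lemma tmem_ins k t s w : size s = k -> size w = k -> tfull k t ->
  tmem (tins s t) w = (w == s) || tmem t w.
Proof.
elim: k t s w => [|k IH] [b|l r] [|c s] [|c' w] //= [] Hs [] Hw /andP [Hl Hr].
rewrite eqseq_cons.
by case: c; case: c' => /=; rewrite ?IH.
Qed.
Lemma tmem_build d l w : all (fun s => size s == d) l -> size w = d ->
  tmem (tbuild d l) w = (w \in l).
Proof.
move=> Hl Hw; suff : tfull d (tbuild d l) /\ tmem (tbuild d l) w = (w \in l) by case.
elim: l Hl => [|s l IH] /=; first by rewrite tfull_empty tmem_empty.
move=> /andP [/eqP Hs /IH [Hf Hm]]; split; first exact: tins_full.
by rewrite (tmem_ins Hs Hw Hf) Hm in_cons.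
Qed.

Section Reach.
Variable d : nat.
Variable X : trie.
Variable y : V.
Fixpoint reach2 (n : nat) (z : V) : bool :=
  if n is n'.+1 then
    ahas (fun i => if nth false z i == nth false y i then false else
                  let w := cflip i z in if w == y then true else if tmem X w then false else reach2 n' w) (iota 0 d)
  else z == y.
End Reach.

Fixpoint pairs_ok d (t : trie) (l : seq V) :=
  if l is x :: l' then (if aall (fun y => reach2 d t y (cham x y) x) l' then pairs_ok d t l' else false) else true.
Definition cmv2 d l := pairs_ok d (tbuild d l) l.

Fixpoint collect d (vs acc : seq V) (need : nat) : seq (seq V) :=
  match vs with
  | [::] => if need == 0 then [:: acc] else [::]
  | v :: vs' =>
     if size vs < need then [::] else
     (if cmv2 d (v :: acc) then collect d vs' (v :: acc) need.-1 else [::]) ++ collect d vs' acc need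
  end.

Lemma pairs_okP d t (l : seq V) (R := fun x y => reach2 d t y (cham x y) x) :
  {in l &, forall x y, R x y = R y x} -> {in l, forall x, R x x} ->
  pairs_ok d t l <-> {in l &, forall x y, R x y}.
Proof.
elim: l => [|x l IH] /= Hsym Hrefl; first by split.
have Hsym' : {in l &, forall x y, R x y = R y x}.
  by move=> a b Ha Hb; apply: Hsym; rewrite in_cons ?Ha ?Hb orbT.
have Hrefl' : {in l, forall x, R x x} by move=> a Ha; apply: Hrefl; rewrite in_cons Ha orbT.
rewrite aallE; case: allP => Hall; last first.
  split => // H; case: Hall => z Hz; apply: H; rewrite in_cons ?eqxx ?Hz ?orbT //.
rewrite (IH Hsym' Hrefl'); split => H a b.
- rewrite !in_cons => /orP [/eqP->|Ha] /orP [/eqP->|Hb].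
  + by apply: Hrefl; rewrite in_cons eqxx.
  + exact: Hall.
  + rewrite Hsym ?in_cons ?eqxx ?Ha ?orbT //; exact: Hall.
  + exact: H.
- by move=> Ha Hb; apply: H; rewrite in_cons ?Ha ?Hb orbT.
Qed.

Section Tup.
Variable d : nat.
Notation T := (d.-tuple bool).
Notation h u v := (cham (tval u) (tval v)).

Lemma flip_tupleP i (u : T) : size (cflip i u) == d.
Proof. by rewrite size_cflip size_tuple. Qed.
Definition flipT i (u : T) : T := Tuple (flip_tupleP i u).

Lemma sum_cham s t n : size s = n -> size t = n ->
  \sum_(i < n) (nth false s i != nth false t i) = cham s t.
Proof.
elim: n s t => [|n IH] [|b s] [|c t] //=.
  by rewrite big_ord0.
move=> [] Hs [] Ht.
by rewrite big_ord_recl /= -(IH s t Hs Ht).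
Qed.

Lemma chamE (u v : T) : #|[set i : 'I_d | tnth u i != tnth v i]| = h u v.
Proof.
rewrite -(sum_cham (size_tuple u) (size_tuple v)) -sum1_card big_mkcond /=.
apply: eq_bigr => i _; rewrite inE !(tnth_nth false).
by case: (_ != _).
Qed.

Lemma QadjE (u v : T) : Qadj u v = (h u v == 1).
Proof. by rewrite /Qadj chamE. Qed.

Lemma Qadj_sym (u v : T) : Qadj u v = Qadj v u.
Proof. by rewrite !QadjE cham_sym. Qed.

Lemma QadjP (u v : T) : Qadj u v -> exists2 i, i < d & v = flipT i u.
Proof.
rewrite QadjE => /eqP /cham1 [].
  by rewrite !size_tuple.
rewrite size_tuple => i Hi Hv; exists i => //; exact: val_inj.
Qed.

Lemma Qadj_flip i (u : T) : i < d -> Qadj u (flipT i u).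
Proof. by move=> Hi; rewrite QadjE /= cham_cflip // size_tuple. Qed.

Lemma h_flip i (u v : T) : i < d ->
  h (flipT i u) v + 2 * (nth false u i != nth false v i) = (h u v).+1.
Proof. by move=> Hi; apply: cham_flip; rewrite !size_tuple. Qed.

Lemma h_eq0 (u v : T) : (h u v == 0) = (u == v).
Proof. by rewrite cham_eq0 // !size_tuple. Qed.

Lemma walk_len (x y : T) p : walk (@Qadj d) x y p -> h x y <= size p.
Proof.
elim: p x => [|w p IH] x [] /=.
  by move=> _ ->; rewrite cham_refl.
move=> /andP [Hxw Hp] Hl.
have {IH}IH := IH w (conj Hp Hl).
have [i Hi Hw] := QadjP Hxw; subst w.
move: IH => /= IH; have := h_flip x y Hi => /=; lia.
Qed.

Lemma walk_ex (x y : T) : exists p, walk (@Qadj d) x y p /\ size p = h x y.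
Proof.
move Hn: (h x y) => n; elim: n x Hn => [|n IH] x Hn.
  exists [::]; split => //; split => //=.
  by apply/eqP; rewrite -h_eq0 Hn.
have Hsz : size (tval x) = size (tval y) by rewrite !size_tuple.
have Hpos : 0 < h x y by rewrite Hn.
have [i Hi Hb] := cham_pos Hsz Hpos.
rewrite size_tuple in Hi.
have Hw : h (flipT i x) y = n by move: (h_flip x y Hi); rewrite Hn Hb /=; lia.
have [p [[Hp Hl] Hs]] := IH (flipT i x) Hw.
exists (flipT i x :: p); split; last by rewrite /= Hs.
by split => //=; rewrite Qadj_flip.
Qed.


Lemma shortestE (x y : T) p : shortest_path (@Qadj d) x y p <-> walk (@Qadj d) x y p /\ size p = h x y.
Proof.
split.
- move=> [Hw Hmin]; split => //; apply/eqP; rewrite eqn_leq walk_len // andbT.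
  by have [q [Hq <-]] := walk_ex x y; exact: Hmin.
- move=> [Hw Hs]; split => // q Hq; rewrite Hs; exact: walk_len.
Qed.

Lemma internal_cons (w : T) p : p != [::] -> internal (w :: p) = w :: internal p.
Proof. by case: p => //= a p _; rewrite /internal /=. Qed.

Lemma reach2P (X : {set T}) t (y : T) : (forall w : T, tmem t (tval w) = (w \in X)) ->
  forall n (z : T), h z y = n ->
  reach2 d t (tval y) n (tval z) <->
  exists p, walk (@Qadj d) z y p /\ size p = n /\ forall v, v \in internal p -> v \notin X.
Proof.
move=> Ht; elim=> [|n IH] z Hn /=.
  split.
  - move=> /eqP Hzy; have Hz : z = y by exact: val_inj.
    by exists [::]; subst z.
  - by move=> [[|a p] [[_ Hl] [Hs _]]] //=; rewrite -Hl.
rewrite ahasE; split.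
- move=> /hasP [i]; rewrite mem_iota add0n => /andP [_ Hi].
  case: eqP => // /eqP Hb.
  have Hw : h (flipT i z) y = n by move: (h_flip z y Hi); rewrite Hn Hb /=; lia.
  case: eqP => [Hwy _|Hwy].
  + have Hwy' : flipT i z = y by exact: val_inj.
    exists [:: flipT i z]; split; first by split => //=; rewrite Qadj_flip.
    by split => //; move: Hw; rewrite Hwy' cham_refl => <-.
  + rewrite (Ht (flipT i z)); case: ifP => // HX /(IH _ Hw) [p [[Hp Hl] [Hs Hint]]].
    have Hp0 : p != [::] by apply/eqP => Hp0; subst p; apply: Hwy; rewrite /= -Hl.
    exists (flipT i z :: p); split; first by split => //=; rewrite Qadj_flip.
    split; first by rewrite /= Hs.
    move=> v; rewrite internal_cons // in_cons => /orP [/eqP->|]; first by rewrite HX.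
    exact: Hint.
- move=> [p [[Hp Hl] [Hs Hint]]]; case: p Hp Hl Hs Hint => [|w p] //= /andP [Hzw Hp] Hl [Hs] Hint.
  have [i Hi Hwi] := QadjP Hzw; subst w.
  have Hle := walk_len (conj Hp Hl); rewrite Hs in Hle.
  have Hf := h_flip z y Hi.
  have Hb : nth false z i != nth false y i.
    apply/negP => Hb; move: Hf Hle; rewrite Hn Hb /=. lia.
  have Hw : h (flipT i z) y = n by move: Hf; rewrite Hn Hb /=; lia.
  apply/hasP; exists i; first by rewrite mem_iota add0n Hi.
  rewrite (negbTE Hb); case: eqP => // Hwy.
  have Hp0 : p != [::] by apply/eqP => Hp0; subst p; apply: Hwy; rewrite /= -Hl.
  rewrite (Ht (flipT i z)) (negbTE (Hint _ _)); last by rewrite internal_cons // in_cons eqxx.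
  apply/(IH _ Hw); exists p; split => //; split => // v Hv; apply: Hint.
  by rewrite internal_cons // in_cons Hv orbT.
Qed.

Lemma belast_take (a : T) s : belast a s = take (size s) (a :: s).
Proof. by elim: s a => //= b s IH a; rewrite IH. Qed.

Lemma visible_sym (X : {set T}) x y : visible (@Qadj d) X x y -> visible (@Qadj d) X y x.
Proof.
move=> [p [/shortestE [[Hp Hl] Hs] Hint]].
exists (rev (belast x p)); split.
  apply/shortestE; split; last by rewrite size_rev size_belast Hs cham_sym.
  split.
  - rewrite -Hl rev_path; apply: sub_path Hp => a b /=; by rewrite Qadj_sym.
  - case: p Hp Hl Hs Hint => [|a p] /= _ Hl _ _; first by [].
    by rewrite rev_cons last_rcons.
move=> v; case: p Hp Hl Hs Hint => [|a p] //= _ _ _ Hint.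
rewrite /internal rev_cons size_rcons /= -cats1 take_cat size_rev size_belast ltnn subnn take0 cats0.
by rewrite mem_rev belast_take => Hv; apply: Hint.
Qed.


Definition sized (l : seq V) := all (fun s => size s == d) l.

Lemma in_sized (l : seq V) s : sized l -> s \in l -> exists u : T, tval u = s.
Proof. by move=> /allP Hl /Hl Hs; exists (Tuple Hs). Qed.

Lemma visibleE (X : {set T}) t x y : (forall w : T, tmem t (tval w) = (w \in X)) ->
  visible (@Qadj d) X x y <-> reach2 d t (tval y) (h x y) (tval x).
Proof.
move=> Ht; rewrite (reach2P Ht (erefl _)); split.
- by move=> [p [/shortestE [Hw Hs] Hi]]; exists p.
- by move=> [p [Hw [Hs Hi]]]; exists p; split => //; apply/shortestE.
Qed.

Lemma MV_cmv2 (X : {set T}) l : sized l -> (forall u : T, (u \in X) = (tval u \in l)) ->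
  mutual_visibility_set (@Qadj d) X <-> cmv2 d l.
Proof.
move=> Hl HX.
have Ht : forall w : T, tmem (tbuild d l) (tval w) = (w \in X).
  by move=> w; rewrite HX tmem_build // size_tuple.
rewrite /cmv2 pairs_okP.
- split.
  + move=> H s s' Hs Hs'.
    have [u Hu] := in_sized Hl Hs; have [u' Hu'] := in_sized Hl Hs'; subst s s'.
    by apply/(visibleE _ _ Ht); apply: H; rewrite HX.
  + move=> H u u' Hu Hu'; apply/(visibleE _ _ Ht); apply: H; by rewrite -HX.
- move=> s s' Hs Hs'.
  have [u Hu] := in_sized Hl Hs; have [u' Hu'] := in_sized Hl Hs'; subst s s'.
  by apply/idP/idP => /(visibleE _ _ Ht) /visible_sym /(visibleE _ _ Ht).
- by move=> s _; rewrite cham_refl /=.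
Qed.

Lemma MV_sub (X Y : {set T}) : mutual_visibility_set (@Qadj d) X -> Y \subset X ->
  mutual_visibility_set (@Qadj d) Y.
Proof.
move=> H /subsetP HYX x y Hx Hy.
have [p [Hp Hi]] := H x y (HYX _ Hx) (HYX _ Hy).
exists p; split => // v /Hi; apply: contra; exact: HYX.
Qed.

Lemma cmv2_sub (l l' : seq V) : sized l -> {subset l' <= l} -> cmv2 d l -> cmv2 d l'.
Proof.
move=> Hl Hsub Hc.
have Hl' : sized l' by apply/allP => s /Hsub; move/allP: Hl; apply.
have HXl' : forall u : T, (u \in [set u : T | tval u \in l']) = (tval u \in l') by move=> u; rewrite inE.
apply/(MV_cmv2 Hl' HXl').
apply: (@MV_sub [set u : T | tval u \in l]).
  have HXl : forall u : T, (u \in [set u : T | tval u \in l]) = (tval u \in l) by move=> u; rewrite inE.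
  by apply/(MV_cmv2 Hl HXl).
by apply/subsetP => u; rewrite !inE; apply: Hsub.
Qed.

Lemma card_l (X : {set T}) l : uniq l -> sized l -> (forall u : T, (u \in X) = (tval u \in l)) ->
  #|X| = size l.
Proof.
move=> Hu Hl HX; rewrite cardE -(size_map val).
apply/perm_size/uniq_perm => //.
  by rewrite map_inj_uniq ?enum_uniq //; exact: val_inj.
move=> s; apply/mapP/idP.
- by move=> [u]; rewrite mem_enum HX => Hu' ->.
- move=> Hs; have [u Hu'] := in_sized Hl Hs.
  by exists u; [rewrite mem_enum HX Hu' | rewrite -Hu'].
Qed.

End Tup.

Lemma sized_filter d (P : pred V) l : sized d l -> sized d (filter P l).
Proof. by move=> /allP H; apply/allP => s; rewrite mem_filter => /andP [_ /H]. Qed.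

Lemma collect_complete d vs acc need (P : pred V) : sized d vs -> sized d acc ->
  cmv2 d (rev (filter P vs) ++ acc) -> need <= size (filter P vs) ->
  rev (filter P vs) ++ acc \in collect d vs acc need.
Proof.
elim: vs acc need => [|v vs IH] acc need /=.
  by move=> _ _ _; rewrite leqn0 => /eqP ->; rewrite mem_seq1.
move=> /andP [Hv Hvs] Hacc.
have Hsz : size (filter P vs) <= size vs by rewrite size_filter count_size.
case: ifP => HP Hc Hn.
- have Hnl : ~~ ((size vs).+1 < need) by rewrite -leqNgt; move: Hn => /=; lia.
  rewrite (negbTE Hnl) mem_cat; apply/orP; left.
  have Hc' : cmv2 d (rev (filter P vs) ++ v :: acc) by rewrite rev_cons -cats1 -catA in Hc.
  have Hsacc : sized d (v :: acc) by rewrite /sized /= Hv.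
  have Hva : cmv2 d (v :: acc).
    apply: (cmv2_sub _ _ Hc').
      rewrite /sized all_cat all_rev; apply/andP; split; [exact: sized_filter | exact: Hsacc].
    by move=> s Hs; rewrite mem_cat Hs orbT.
  rewrite Hva rev_cons -cats1 -catA /=.
  apply: IH => //; move: Hn => /=; lia.
- have Hnl : ~~ ((size vs).+1 < need) by rewrite -leqNgt; move: Hn => /=; lia.
  by rewrite (negbTE Hnl) mem_cat IH ?orbT.
Qed.

Fixpoint bls n : seq (seq bool) := if n is n'.+1 then [seq b :: s | b <- [:: false; true], s <- bls n'] else [:: [::]].

Lemma mem_bls n (s : seq bool) : size s = n -> s \in bls n.
Proof.
elim: n s => [|n IH] [|b s] //= [] Hs.
by rewrite !mem_cat; case: b; rewrite (map_f _ (IH _ Hs)) ?orbT.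
Qed.

Definition codes d (X : {set d.-tuple bool}) : pred V := fun s => [exists u in X, tval u == s].

Lemma codesP d (X : {set d.-tuple bool}) (u : d.-tuple bool) : codes X (tval u) = (u \in X).
Proof.
apply/existsP/idP => [[w /andP [Hw /eqP Hwu]]|Hu].
  by have -> : u = w by exact: val_inj.
by exists u; rewrite Hu eqxx.
Qed.

Lemma filter_codes d (X : {set d.-tuple bool}) vs :
  (forall u : d.-tuple bool, tval u \in vs) ->
  forall u : d.-tuple bool, (u \in X) = (tval u \in filter (codes X) vs).
Proof. by move=> Hc u; rewrite mem_filter codesP Hc andbT. Qed.

Lemma ub_search d vs n : sized d vs -> uniq vs -> (forall u : d.-tuple bool, tval u \in vs) ->
  collect d vs [::] n.+1 = [::] ->
  forall X : {set d.-tuple bool}, mutual_visibility_set (@Qadj d) X -> #|X| <= n.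
Proof.
move=> Hs Hu Hc Hcol X HX.
have HXZ := filter_codes X Hc.
have HZs : sized d (filter (codes X) vs) by exact: sized_filter.
rewrite (card_l (filter_uniq _ Hu) HZs HXZ) leqNgt; apply/negP => Hn.
have Hc2 : cmv2 d (rev (filter (codes X) vs) ++ [::]).
  have Hs' : sized d (rev (filter (codes X) vs) ++ [::]) by rewrite cats0 /sized all_rev.
  have Hmem : forall u, (u \in X) = (tval u \in rev (filter (codes X) vs) ++ [::]).
    by move=> u; rewrite cats0 mem_rev HXZ.
  exact/(MV_cmv2 Hs' Hmem).
have := collect_complete Hs (isT : sized d [::]) Hc2 Hn.
by rewrite Hcol.
Qed.

Lemma half d lo up (P : pred V) m K : sized d lo -> sized d up ->
  cmv2 d (rev (filter P up) ++ rev (filter P lo)) ->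
  aall (fun L => (size L == m) && (collect d up L K == [::])) (collect d lo [::] m) ->
  m <= size (filter P lo) -> size (filter P lo) = m /\ size (filter P up) < K.
Proof.
move=> Hlo Hup Hc Hall Hm.
have Hsl : sized d (rev (filter P lo)) by rewrite /sized all_rev; exact: sized_filter.
have Hsu : sized d (rev (filter P up)) by rewrite /sized all_rev; exact: sized_filter.
have Hc1 : cmv2 d (rev (filter P lo) ++ [::]).
  apply: (cmv2_sub _ _ Hc); first by rewrite /sized all_cat; apply/andP; split.
  by move=> s; rewrite cats0 mem_cat => ->; rewrite orbT.
have Hin := collect_complete Hlo (isT : sized d [::]) Hc1 Hm.
rewrite aallE in Hall; move/allP: Hall => /(_ _ Hin) /andP [].
rewrite cats0 size_rev => /eqP Hsz /eqP Hnil; split => //.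
rewrite ltnNge; apply/negP => HK.
by have := collect_complete Hup Hsl Hc HK; rewrite Hnil.
Qed.

Lemma ub_split (lo up : seq V) : sized 5 (lo ++ up) -> uniq (lo ++ up) ->
  (forall u : 5.-tuple bool, tval u \in lo ++ up) ->
  aall (fun L => (size L == 9) && (collect 5 up L 8 == [::])) (collect 5 lo [::] 9) ->
  aall (fun L => (size L == 9) && (collect 5 lo L 8 == [::])) (collect 5 up [::] 9) ->
  forall X : {set 5.-tuple bool}, mutual_visibility_set (@Qadj 5) X -> #|X| <= 16.
Proof.
move=> Hs Hu Hc Hl Hup X HX.
have HXZ := filter_codes X Hc.
have HZs : sized 5 (filter (codes X) (lo ++ up)) by exact: sized_filter.
rewrite (card_l (filter_uniq _ Hu) HZs HXZ) filter_cat size_cat.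
move: Hs; rewrite /sized all_cat => /andP [Hlo Hupp].
set Zl := filter _ lo; set Zu := filter _ up.
have Hsall : sized 5 (rev Zu ++ rev Zl).
  by rewrite /sized all_cat !all_rev; apply/andP; split; apply: sized_filter.
have Hc1 : cmv2 5 (rev Zu ++ rev Zl).
  have Hmem : forall u, (u \in X) = (tval u \in rev Zu ++ rev Zl).
    by move=> u; rewrite HXZ filter_cat !mem_cat !mem_rev orbC.
  exact/(MV_cmv2 Hsall Hmem).
have Hc2 : cmv2 5 (rev Zl ++ rev Zu).
  apply: (cmv2_sub Hsall _ Hc1) => s; rewrite !mem_cat orbC //.
change (size (Zl : seq V) + size (Zu : seq V) <= 16).
case: (leqP 9 (size Zl)) => H1.
  have [E1 E2] := half Hlo Hupp Hc1 Hl H1; rewrite -/Zl -/Zu in E1 E2; clearbody Zl Zu; lia.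
case: (leqP 9 (size Zu)) => H2.
  have [E1 E2] := half Hupp Hlo Hc2 Hup H2; rewrite -/Zl -/Zu in E1 E2; clearbody Zl Zu; lia.
clearbody Zl Zu; lia.
Qed.

Definition loQ5 := [seq rcons s false | s <- bls 4].
Definition upQ5 := [seq rcons s true | s <- bls 4].

Lemma coverQ5 (u : 5.-tuple bool) : tval u \in loQ5 ++ upQ5.
Proof.
move: (tval u) (size_tuple u) => s; case/lastP: s => [|s b] //.
rewrite size_rcons => -[] /mem_bls Hs; rewrite mem_cat.
by case: b; rewrite (map_f _ Hs) ?orbT.
Qed.

Lemma cover_bls d (u : d.-tuple bool) : tval u \in bls d.
Proof. exact: mem_bls (size_tuple u). Qed.

Lemma vtxE d s : tval (vtx d s) = [seq nth 0 s i != 0 | i <- iota 0 d].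
Proof. by rewrite /vtx /= -val_enum_ord -map_comp. Qed.

Lemma ex_mv d (S : seq (seq nat)) (X : {set d.-tuple bool}) :
  (forall u, (u \in X) = (u \in [seq vtx d s | s <- S])) ->
  sized d [seq [seq nth 0 s i != 0 | i <- iota 0 d] | s <- S] ->
  uniq [seq [seq nth 0 s i != 0 | i <- iota 0 d] | s <- S] ->
  cmv2 d [seq [seq nth 0 s i != 0 | i <- iota 0 d] | s <- S] ->
  mutual_visibility_set (@Qadj d) X /\ #|X| = size S.
Proof.
move=> HX Hs Hu Hc.
have Hm : forall u, (u \in X) = (tval u \in [seq [seq nth 0 s i != 0 | i <- iota 0 d] | s <- S]).
  move=> u; rewrite HX -(mem_map val_inj) -map_comp.
  by congr (_ \in _); apply: eq_map => s /=; rewrite vtxE.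
split; first exact/(MV_cmv2 Hs Hm).
by rewrite (card_l Hu Hs Hm) size_map.
Qed.

Lemma cQ3 : collect 3 (bls 3) [::] 6 = [::]. Proof. by vm_compute. Qed.
Lemma cQ4 : collect 4 (bls 4) [::] 10 = [::]. Proof. by vm_compute. Qed.
Lemma ubQ3 X : mutual_visibility_set (@Qadj 3) X -> #|X| <= 5.
Proof. apply: (ub_search _ _ (@cover_bls 3) cQ3); by vm_compute. Qed.
Lemma ubQ4 X : mutual_visibility_set (@Qadj 4) X -> #|X| <= 9.
Proof. apply: (ub_search _ _ (@cover_bls 4) cQ4); by vm_compute. Qed.

Definition csig (p : seq nat) (a : seq bool) (s : V) : V :=
  mkseq (fun i => nth false s (nth 0 p i) (+) nth false a i) (size p).

Lemma size_csig p a s : size (csig p a s) = size p.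
Proof. by rewrite size_mkseq. Qed.

Lemma cham_sum s t n : size s = n -> size t = n ->
  cham s t = \sum_(i <- iota 0 n) (nth false s i != nth false t i).
Proof.
move=> Hs Ht; rewrite -(sum_cham Hs Ht).
have -> : iota 0 n = index_iota 0 n by rewrite /index_iota subn0.
by rewrite big_mkord.
Qed.

Lemma cham_csig d p a s t : perm_eq p (iota 0 d) -> size s = d -> size t = d ->
  cham (csig p a s) (csig p a t) = cham s t.
Proof.
move=> Hp Hs Ht.
have Hsp : size p = d by rewrite (perm_size Hp) size_iota.
rewrite (cham_sum Hs Ht) (@cham_sum _ _ d); try by rewrite size_csig.
have Hp' : perm_eq (iota 0 d) p by rewrite perm_sym.
rewrite [RHS](perm_big _ Hp') -[in RHS](mkseq_nth 0 p) Hsp /mkseq big_map.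
apply: eq_big_seq => i; rewrite mem_iota add0n => /andP [_ Hi].
rewrite /csig /mkseq Hsp !(nth_map 0) ?size_iota // nth_iota // add0n.
by case: (nth false a i); rewrite ?addbT ?addbF; case: (nth false s _); case: (nth false t _).
Qed.

Section SigT.
Variable d : nat.
Notation T := (d.-tuple bool).
Variables (p : seq nat) (a : seq bool).
Hypothesis Hp : perm_eq p (iota 0 d).

Lemma csig_sz (u : T) : size (csig p a u) == d.
Proof. by rewrite size_csig (perm_size Hp) size_iota. Qed.
Definition sigT (u : T) : T := Tuple (csig_sz u).

Lemma h_sig (u v : T) : cham (tval (sigT u)) (tval (sigT v)) = cham (tval u) (tval v).
Proof. by rewrite /= (cham_csig a Hp) ?size_tuple. Qed.

Lemma Qadj_sig (u v : T) : Qadj (sigT u) (sigT v) = Qadj u v.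
Proof. by rewrite !QadjE h_sig. Qed.

Lemma sig_inj : injective sigT.
Proof. by move=> u v H; apply/eqP; rewrite -h_eq0 -h_sig H cham_refl. Qed.

Lemma MV_sig (X : {set T}) : mutual_visibility_set (@Qadj d) X ->
  mutual_visibility_set (@Qadj d) (sigT @: X).
Proof.
move=> HX x' y' /imsetP [x Hx ->] /imsetP [y Hy ->].
have [q [/shortestE [[Hq Hl] Hs] Hi]] := HX x y Hx Hy.
exists (map sigT q); split.
  apply/shortestE; split; last by rewrite size_map h_sig.
  split; last by rewrite last_map Hl.
  suff -> : forall z, path (@Qadj d) (sigT z) (map sigT q) = path (@Qadj d) z q by [].
  by elim: (q) => //= w r IH z; rewrite Qadj_sig IH.
move=> v; rewrite /internal size_map -map_take => /mapP [w Hw ->].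
by rewrite (mem_imset _ _ sig_inj); exact: Hi.
Qed.

Lemma card_sig (X : {set T}) : #|sigT @: X| = #|X|.
Proof. exact: (card_imset _ sig_inj). Qed.
End SigT.

Definition goodc (lo up S : seq V) (c : seq nat * seq bool) (L : seq V) :=
  [&& perm_eq c.1 (iota 0 5), all (fun s => csig c.1 c.2 s \in lo) lo,
      all (fun s => csig c.1 c.2 s \in up) up & perm_eq (map (csig c.1 c.2) L) S].

Lemma codes_ex d (X : {set d.-tuple bool}) s : codes X s -> exists2 u, u \in X & tval u = s.
Proof. by move=> /existsP [u /andP [Hu /eqP <-]]; exists u. Qed.

Lemma csig_inj d p a s t : perm_eq p (iota 0 d) -> size s = d -> size t = d ->
  csig p a s = csig p a t -> s = t.
Proof.
move=> Hp Hs Ht H; apply/eqP; rewrite -cham_eq0 ?Hs ?Ht //.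
by rewrite -(cham_csig a Hp Hs Ht) H cham_refl.
Qed.

Notation T5 := (5.-tuple bool).

Section Q5gen.
Variables (lo up S : seq V) (certsL : seq ((seq nat * seq bool) * seq V)) (phi : seq nat * seq bool).
Hypothesis Hlu : sized 5 (lo ++ up) && uniq (lo ++ up).
Hypothesis Hcov : forall u : T5, tval u \in lo ++ up.
Hypothesis Hcerts : all (fun cL => goodc lo up S cL.1 cL.2) certsL.
Hypothesis HLs : collect 5 lo [::] 9 = map snd certsL.
Hypothesis HS : collect 5 up S 8 = [::].
Hypothesis HSs : sized 5 S && (size S <= 9).
Hypothesis Hphi : [&& perm_eq phi.1 (iota 0 5), all (fun s => csig phi.1 phi.2 s \in lo) up
      & all (fun s => csig phi.1 phi.2 s \in up) lo].

Lemma codes_cmv (X : {set T5}) : mutual_visibility_set (@Qadj 5) X ->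
  cmv2 5 (rev (filter (codes X) (lo ++ up))).
Proof.
move=> HX; have /andP [Hs Hu] := Hlu.
have Hs' : sized 5 (rev (filter (codes X) (lo ++ up))) by rewrite /sized all_rev; exact: sized_filter.
have Hm : forall u, (u \in X) = (tval u \in rev (filter (codes X) (lo ++ up))).
  by move=> u; rewrite mem_rev -filter_codes.
exact/(MV_cmv2 Hs' Hm).
Qed.

Lemma card_split (X : {set T5}) :
  #|X| = size (filter (codes X) lo) + size (filter (codes X) up).
Proof.
have /andP [Hs Hu] := Hlu.
rewrite (card_l (filter_uniq _ Hu) (sized_filter _ Hs) (filter_codes X Hcov)).
by rewrite filter_cat size_cat.
Qed.

Lemma key (X : {set T5}) : mutual_visibility_set (@Qadj 5) X ->
  9 <= size (filter (codes X) lo) -> #|X| <= 16.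
Proof.
move=> HX H9; have /andP [Hs Hu] := Hlu.
have /andP [HSs1 HSs2] := HSs.
move: (Hs); rewrite /sized all_cat => /andP [Hlo Hup].
move: (Hu); rewrite cat_uniq => /and3P [Hulo _ Huup].
have Hdisj : forall s, s \in up -> s \in lo -> False.
  move=> s Hsu Hsl; move: Hu; rewrite cat_uniq => /and3P [_ /hasPn /(_ s Hsu)].
  by rewrite Hsl.
have HcZ : cmv2 5 (rev (filter (codes X) lo) ++ [::]).
  apply: (cmv2_sub _ _ (codes_cmv HX)).
    by rewrite /sized all_rev; exact: sized_filter.
  move=> s; rewrite cats0 !mem_rev filter_cat mem_cat => H; apply/orP; left; exact: H.
have HL := collect_complete Hlo (isT : sized 5 [::]) HcZ H9.
rewrite cats0 HLs in HL.
move/allP: Hcerts => Hc.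
move: HL => /mapP [[[p a] L'] /Hc /= Hg HL']; subst L'.
move: Hg => /and4P [Hp Hplo Hpup Hperm]; rewrite /= in Hplo Hpup Hperm.
have {}Hp : perm_eq p (iota 0 5) := Hp.
set Y := sigT a Hp @: X.
have HY : mutual_visibility_set (@Qadj 5) Y by exact: MV_sig.
have HcY : #|Y| = #|X| by rewrite /Y (card_imset _ (@sig_inj _ _ a Hp)).
have HYl : {subset filter (codes Y) lo <= S}.
  move=> s; rewrite mem_filter => /andP [/codes_ex [w /imsetP [u Hu' ->] <-] Hsl].
  rewrite -(perm_mem Hperm); apply: map_f.
  have := Hcov u; rewrite mem_cat => /orP [Hul|Huu].
    by rewrite mem_rev mem_filter Hul andbT codesP.
  by exfalso; apply: (Hdisj (csig p a (tval u))); [move/allP: Hpup; apply | ].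
have Hszl : size (filter (codes Y) lo) <= 9.
  have := uniq_leq_size (filter_uniq _ Hulo) HYl.
  by move=> H; apply: leq_trans H HSs2.
rewrite leqNgt; apply/negP => H17.
have HcY' := card_split Y.
have H8 : 8 <= size (filter (codes Y) up).
  move: HcY' HcY H17 Hszl; set a1 := size (filter (codes Y) lo); set a2 := size (filter (codes Y) up).
  move=> E1 E2; rewrite -E2 E1 => H H'; clearbody a1 a2; clear -H H'; lia.
have Hc2 : cmv2 5 (rev (filter (codes Y) up) ++ S).
  apply: (cmv2_sub _ _ (codes_cmv HY)).
    by rewrite /sized all_rev; exact: sized_filter.
  move=> s; rewrite mem_cat mem_rev => /orP [Hsu|HsS].
    rewrite mem_rev filter_cat mem_cat; apply/orP; right; exact: Hsu.
  move: HsS; rewrite -(perm_mem Hperm) => /mapP [s' Hs' ->].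
  move: Hs'; rewrite mem_rev mem_filter => /andP [/codes_ex [u Hu' <-] Hul].
  rewrite mem_rev mem_filter mem_cat.
  have -> : csig p a (tval u) = tval (sigT a Hp u) by [].
  rewrite codesP (mem_imset _ _ (@sig_inj _ _ a Hp)) Hu' /=.
  by move/allP: Hplo => /(_ _ Hul) ->.
have := collect_complete Hup HSs1 Hc2 H8.
by rewrite HS.
Qed.

Lemma ub5 (X : {set T5}) : mutual_visibility_set (@Qadj 5) X -> #|X| <= 16.
Proof.
move=> HX; have /andP [Hs Hu] := Hlu.
move: (Hs); rewrite /sized all_cat => /andP [Hlo Hup].
move: (Hu); rewrite cat_uniq => /and3P [Hulo _ Huup].
case: (leqP 9 (size (filter (codes X) lo))) => H1; first exact: key.
case: (leqP 9 (size (filter (codes X) up))) => H2; last first.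
  by rewrite card_split; move: H1 H2; clear; lia.
case: phi Hphi => p a /and3P [Hp Hpul Hplu]; rewrite /= in Hpul Hplu.
have {}Hp : perm_eq p (iota 0 5) := Hp.
have HY := @MV_sig _ _ a Hp _ HX.
rewrite -(card_imset X (@sig_inj _ _ a Hp)); apply: (key HY).
apply: leq_trans H2 _.
rewrite -(size_map (csig p a)); apply: uniq_leq_size.
  rewrite map_inj_in_uniq; first exact: filter_uniq Huup.
  move=> s t; rewrite !mem_filter => /andP [_ Hsu] /andP [_ Htu].
  apply: (csig_inj Hp).
    by move/allP: Hup => /(_ _ Hsu) /eqP.
  by move/allP: Hup => /(_ _ Htu) /eqP.
move=> s /mapP [s' ]; rewrite mem_filter => /andP [/codes_ex [u Hu' <-] Hsu] ->.
rewrite mem_filter (allP Hpul _ Hsu) andbT.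
have -> : csig p a (tval u) = tval (sigT a Hp u) by [].
by rewrite codesP (mem_imset _ _ (@sig_inj _ _ a Hp)).
Qed.
End Q5gen.

Definition Lall := Eval vm_compute in collect 5 loQ5 [::] 9.
Definition S9 := Eval vm_compute in head [::] Lall.
Definition loQ5c := Eval vm_compute in loQ5.
Definition upQ5c := Eval vm_compute in upQ5.
Definition perms5 := [seq rcons q 4 | q <- permutations (iota 0 4)].
Definition cands := [seq (q, a) | q <- perms5, a <- [seq rcons s false | s <- bls 4]].
Definition findc L := head ([::], [::]) (filter (fun c => goodc loQ5c upQ5c S9 c L) cands).
Definition certsL := Eval vm_compute in [seq (findc L, L) | L <- Lall].
Definition phi5 := (iota 0 5, [:: false; false; false; false; true]).

Lemma cover5c (u : T5) : tval u \in loQ5c ++ upQ5c.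
Proof.
have -> : loQ5c ++ upQ5c = loQ5 ++ upQ5 by vm_compute.
exact: coverQ5.
Qed.
Lemma f1 : sized 5 (loQ5c ++ upQ5c) && uniq (loQ5c ++ upQ5c). Proof. by vm_compute. Qed.
Lemma f2 : all (fun cL => goodc loQ5c upQ5c S9 cL.1 cL.2) certsL. Proof. by vm_compute. Qed.
Lemma f3 : collect 5 loQ5c [::] 9 = map snd certsL. Proof. by vm_compute. Qed.
Lemma f4 : collect 5 upQ5c S9 8 = [::]. Proof. by vm_compute. Qed.
Lemma f5 : sized 5 S9 && (size S9 <= 9). Proof. by vm_compute. Qed.
Lemma f6 : [&& perm_eq phi5.1 (iota 0 5), all (fun s => csig phi5.1 phi5.2 s \in loQ5c) upQ5c
      & all (fun s => csig phi5.1 phi5.2 s \in upQ5c) loQ5c]. Proof. by vm_compute. Qed.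

Lemma ubQ5 X : mutual_visibility_set (@Qadj 5) X -> #|X| <= 16.
Proof. exact: (ub5 f1 cover5c f2 f3 f4 f5 f6). Qed.

Lemma ex3 : mutual_visibility_set (@Qadj 3)
        [set vtx 3 [:: 0;0;0]; vtx 3 [:: 0;0;1]; vtx 3 [:: 1;0;0];
             vtx 3 [:: 1;1;0]; vtx 3 [:: 0;1;1]] /\
  #|[set vtx 3 [:: 0;0;0]; vtx 3 [:: 0;0;1]; vtx 3 [:: 1;0;0];
             vtx 3 [:: 1;1;0]; vtx 3 [:: 0;1;1]]| = 5.
Proof.
apply: (@ex_mv 3 [:: [:: 0;0;0]; [:: 0;0;1]; [:: 1;0;0]; [:: 1;1;0]; [:: 0;1;1]]);
  try by vm_compute.
by move=> u; rewrite !inE !orbA.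
Qed.

Lemma ex4 : let X := [set vtx 4 [:: 0;0;0;0]; vtx 4 [:: 0;0;0;1]; vtx 4 [:: 0;1;0;0];
             vtx 4 [:: 0;1;1;0]; vtx 4 [:: 0;0;1;1]; vtx 4 [:: 1;1;0;1];
             vtx 4 [:: 1;0;1;0]; vtx 4 [:: 1;0;1;1]; vtx 4 [:: 1;1;1;0]] in
  mutual_visibility_set (@Qadj 4) X /\ #|X| = 9.
Proof.
apply: (@ex_mv 4 [:: [:: 0;0;0;0]; [:: 0;0;0;1]; [:: 0;1;0;0];
             [:: 0;1;1;0]; [:: 0;0;1;1]; [:: 1;1;0;1];
             [:: 1;0;1;0]; [:: 1;0;1;1]; [:: 1;1;1;0]]); try by vm_compute.
by move=> u; rewrite !inE !orbA.
Qed.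

Lemma ex5 : let X := [set vtx 5 [:: 0;0;0;0;0]; vtx 5 [:: 0;0;0;0;1]; vtx 5 [:: 0;0;1;0;0];
             vtx 5 [:: 0;0;1;1;0]; vtx 5 [:: 0;0;0;1;1]; vtx 5 [:: 0;1;1;0;1];
             vtx 5 [:: 0;1;0;1;0]; vtx 5 [:: 0;1;0;1;1]; vtx 5 [:: 0;1;1;1;0];
             vtx 5 [:: 1;0;1;0;1]; vtx 5 [:: 1;0;1;1;1]; vtx 5 [:: 1;1;0;0;0];
             vtx 5 [:: 1;1;0;0;1]; vtx 5 [:: 1;1;1;0;0]; vtx 5 [:: 1;1;1;1;0];
             vtx 5 [:: 1;1;0;1;1]] in
  mutual_visibility_set (@Qadj 5) X /\ #|X| = 16.
Proof.
apply: (@ex_mv 5 [:: [:: 0;0;0;0;0]; [:: 0;0;0;0;1]; [:: 0;0;1;0;0];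
             [:: 0;0;1;1;0]; [:: 0;0;0;1;1]; [:: 0;1;1;0;1];
             [:: 0;1;0;1;0]; [:: 0;1;0;1;1]; [:: 0;1;1;1;0];
             [:: 1;0;1;0;1]; [:: 1;0;1;1;1]; [:: 1;1;0;0;0];
             [:: 1;1;0;0;1]; [:: 1;1;1;0;0]; [:: 1;1;1;1;0];
             [:: 1;1;0;1;1]]); try by vm_compute.
by move=> u; rewrite !inE !orbA.
Qed.

Theorem mainTheorem3 :
  is_mu (@Qadj 3) 5 /\ is_mu (@Qadj 4) 9 /\ is_mu (@Qadj 5) 16 /\
      mutual_visibility_set (@Qadj 3)
        [set vtx 3 [:: 0;0;0]; vtx 3 [:: 0;0;1]; vtx 3 [:: 1;0;0];
             vtx 3 [:: 1;1;0]; vtx 3 [:: 0;1;1]] /\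
      mutual_visibility_set (@Qadj 4)
        [set vtx 4 [:: 0;0;0;0]; vtx 4 [:: 0;0;0;1]; vtx 4 [:: 0;1;0;0];
             vtx 4 [:: 0;1;1;0]; vtx 4 [:: 0;0;1;1]; vtx 4 [:: 1;1;0;1];
             vtx 4 [:: 1;0;1;0]; vtx 4 [:: 1;0;1;1]; vtx 4 [:: 1;1;1;0]] /\
      mutual_visibility_set (@Qadj 5)
        [set vtx 5 [:: 0;0;0;0;0]; vtx 5 [:: 0;0;0;0;1]; vtx 5 [:: 0;0;1;0;0];
             vtx 5 [:: 0;0;1;1;0]; vtx 5 [:: 0;0;0;1;1]; vtx 5 [:: 0;1;1;0;1];
             vtx 5 [:: 0;1;0;1;0]; vtx 5 [:: 0;1;0;1;1]; vtx 5 [:: 0;1;1;1;0];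
             vtx 5 [:: 1;0;1;0;1]; vtx 5 [:: 1;0;1;1;1]; vtx 5 [:: 1;1;0;0;0];
             vtx 5 [:: 1;1;0;0;1]; vtx 5 [:: 1;1;1;0;0]; vtx 5 [:: 1;1;1;1;0];
             vtx 5 [:: 1;1;0;1;1]].
Proof.
have [m3 c3] := ex3; have [m4 c4] := ex4; have [m5 c5] := ex5.
split; first by split; [eexists; split; [exact: m3 | exact: c3] | exact: ubQ3].
split; first by split; [eexists; split; [exact: m4 | exact: c4] | exact: ubQ4].
split; first by split; [eexists; split; [exact: m5 | exact: c5] | exact: ubQ5].
by split; [exact: m3 | split; [exact: m4 | exact: m5]].
Qed.
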